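(* Let $n \ge 3$. (i) Every $(n-1)$-limited rigid word is an isoterm for $\mathbf{A}_n$; in particular every word in $\mathsf{B}_n$ is an isoterm for $\mathbf{A}_n$. (ii) Every $(n-2)$-limited rigid word is an isoterm for $\mathbf{A}_n\{\mathtt{B}_n\}$.
   Context: All varieties are varieties of monoids (signature: associative binary operation and identity constant $1$). Words are elements of the free monoid $X^*$ over a countably infinite set $X$ of variables; identities are pairs of words, and variables may be substituted by $1$. For a variety $\mathbf{V}$ and set $\Sigma$ of identities, $\mathbf{V}\Sigma$ is the subvariety of $\mathbf{V}$ defined by $\Sigma$. $\mathbf{O}$ is the variety defined by $xyt_1xt_2y \approx yxt_1xt_2y$, $xt_1xyt_2y \approx xt_1yxt_2y$, $xt_1yt_2xy \approx xt_1yt_2yx$. For $n\ge3$, $\mathtt{A}_n$ is $x^n t_1\cdots t_n \approx t_1x\,t_2x\cdots t_nx$, $\mathtt{B}_n$ is the set of identities $x^{n-1}t \approx x^{n-2}tx \approx\cdots\approx xtx^{n-2}\approx tx^{n-1}$, $\mathbf{A}_n=\mathbf{O}\{\mathtt{A}_n\}$, and $\mathsf{B}_n=\{x^{n-1-j}tx^{j}:0\le j\le n-1\}$. A rigid word is a word $x^{e_0}t_1x^{e_1}t_2x^{e_2}\cdots t_rx^{e_r}$ with $r\ge0$, $e_i\ge0$, and $x,t_1,\dots,t_r$ distinct variables; it is $k$-limited if $e_0+\cdots+e_r\le k$. A word $\mathbf{w}$ is an isoterm for a variety $\mathbf{V}$ if $\mathbf{V}$ satisfies no identity $\mathbf{w}\approx\mathbf{v}$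 with $\mathbf{v}\ne\mathbf{w}$. *)

(* Defs.v *)
From mathcomp Require Import all_boot.
Set Implicit Arguments. Unset Strict Implicit. Unset Printing Implicit Defensive.

Definition word := seq nat.
Definition identity := (word * word)%type.

(* Value of a word in a monoid (M, op, e) under an assignment s : X -> M.
   Variables may be sent to the identity e, i.e. substituted by 1. *)
Definition eval (M : Type) (op : M -> M -> M) (e : M) (s : nat -> M) (w : word) : M :=
  foldr (fun x acc => op (s x) acc) e w.

Definition is_monoid (M : Type) (op : M -> M -> M) (e : M) : Prop :=
  associative op /\ left_id e op /\ right_id e op.

Definition sat_id (M : Type) (op : M -> M -> M) (e : M) (u v : word) : Prop :=
  forall s : nat -> M, eval op e s u = eval op e s v.

Definition in_variety (Sigma : identity -> Prop) (M : Type) (op : M -> M -> M) (e : M) : Prop :=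
  is_monoid op e /\ forall u v, Sigma (u, v) -> sat_id op e u v.

Definition var_sat (Sigma : identity -> Prop) (u v : word) : Prop :=
  forall (M : Type) (op : M -> M -> M) (e : M), in_variety Sigma op e -> sat_id op e u v.

Definition isoterm (Sigma : identity -> Prop) (w : word) : Prop :=
  forall v : word, var_sat Sigma w v -> v = w.

(* Identities defining O, with x = 0, y = 1, t1 = 2, t2 = 3. *)
Definition O_ids (p : identity) : Prop :=
  p = ([:: 0; 1; 2; 0; 3; 1], [:: 1; 0; 2; 0; 3; 1]) \/
  p = ([:: 0; 2; 0; 1; 3; 1], [:: 0; 2; 1; 0; 3; 1]) \/
  p = ([:: 0; 2; 1; 3; 0; 1], [:: 0; 2; 1; 3; 1; 0]).

(* A_n : x^n t1 ... tn ~ t1 x t2 x ... tn x, with x = 0, t_i = i. *)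
Definition A_id (n : nat) : identity :=
  (nseq n 0 ++ iota 1 n, flatten [seq [:: i; 0] | i <- iota 1 n]).

(* x^(n-1-j) t x^j, with x = 0, t = 1 (the words of the set B_n). *)
Definition Bword (n j : nat) : word := nseq (n - 1 - j) 0 ++ 1 :: nseq j 0.

Definition B_ids (n : nat) (p : identity) : Prop :=
  exists2 j, j < n - 1 & p = (Bword n j, Bword n j.+1).

Definition An_ids (n : nat) (p : identity) : Prop := O_ids p \/ p = A_id n.

Definition AnBn_ids (n : nat) (p : identity) : Prop := An_ids n p \/ B_ids n p.

(* The rigid word x^e0 t1 x^e1 ... tr x^er, where es = [:: e0; ...; er]. *)
Definition rigid_of (x : nat) (ts es : seq nat) : word :=
  nseq (head 0 es) x ++ flatten [seq t.1 :: nseq t.2 x | t <- zip ts (behead es)].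

Definition limited_rigid (k : nat) (w : word) : Prop :=
  exists (x : nat) (ts es : seq nat),
    [/\ uniq (x :: ts), size es = (size ts).+1, sumn es <= k & w = rigid_of x ts es].

(* Main.v *)
Require Import Defs.
From mathcomp Require Import all_boot.
From mathcomp Require Import zify.
Set Implicit Arguments. Unset Strict Implicit. Unset Printing Implicit Defensive.

Definition goodb (k : nat) (w : word) : bool :=
  all (fun c => count_mem c w <= k) w &&
  all (fun c => all (fun d => (count_mem c w < 2) || (count_mem d w < 2) || (c == d)) w) w.

Lemma goodP k w : reflect ((forall c, count_mem c w <= k) /\
   (forall c d, 1 < count_mem c w -> 1 < count_mem d w -> c = d)) (goodb k w).
Proof.
apply: (iffP andP) => -[H1 H2]; split.
- move=> c; case: (boolP (c \in w)) => [cin|cnin].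
    by move/allP: H1 => /(_ c cin).
  by rewrite (count_memPn cnin).
- move=> c d hc hd.
  have cin : c \in w by rewrite -has_pred1 has_count; lia.
  have din : d \in w by rewrite -has_pred1 has_count; lia.
  move/allP: H2 => /(_ c cin) /allP /(_ d din).
  case/orP => [/orP [] | /eqP] //; lia.
- by apply/allP => c _; apply: H1.
- apply/allP => c _; apply/allP => d _.
  case: (ltnP (count_mem c w) 2) => //= hc.
  case: (ltnP (count_mem d w) 2) => //= hd.
  by rewrite (H2 c d hc hd) eqxx.
Qed.

Definition Zw : word := [:: 0; 0; 1; 1].
Definition nf k w := if goodb k w then w else Zw.

Lemma Zbad k : goodb k Zw = false.
Proof. by apply/goodP => -[_ H]; have := H 0 1 isT isT. Qed.

Lemma good_catl k a b : goodb k (a ++ b) -> goodb k a.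
Proof.
move/goodP=> [H1 H2]; apply/goodP; split.
  by move=> c; have := H1 c; rewrite count_cat; lia.
move=> c d hc hd; apply: H2; rewrite count_cat; lia.
Qed.

Lemma good_catr k a b : goodb k (a ++ b) -> goodb k b.
Proof.
move/goodP=> [H1 H2]; apply/goodP; split.
  by move=> c; have := H1 c; rewrite count_cat; lia.
move=> c d hc hd; apply: H2; rewrite count_cat; lia.
Qed.

Lemma nf_idem k w : nf k (nf k w) = nf k w.
Proof. rewrite /nf; case: (boolP (goodb k w)) => h; by rewrite ?h ?Zbad. Qed.

Lemma nf_catr k a b : nf k (a ++ nf k b) = nf k (a ++ b).
Proof.
rewrite /nf; case: (boolP (goodb k b)) => hb //.
have -> : goodb k (a ++ b) = false by apply/negbTE; apply: contra hb; apply: good_catr.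
have -> : goodb k (a ++ Zw) = false.
  by apply/negbTE/negP => /good_catr; rewrite Zbad.
done.
Qed.

Lemma nf_catl k a b : nf k (nf k a ++ b) = nf k (a ++ b).
Proof.
rewrite /nf; case: (boolP (goodb k a)) => ha //.
have -> : goodb k (a ++ b) = false by apply/negbTE; apply: contra ha; apply: good_catl.
have -> : goodb k (Zw ++ b) = false.
  by apply/negbTE/negP => /good_catl; rewrite Zbad.
done.
Qed.

Definition M k := {w : word | nf k w == w}.

Lemma nf_idem_b k w : nf k (nf k w) == nf k w.
Proof. by rewrite nf_idem. Qed.

Definition embed k (w : word) : M k := exist _ (nf k w) (nf_idem_b k w).
Definition mop k (a b : M k) : M k := embed k (sval a ++ sval b).
Lemma nil_b k : nf k [::] == [::].
Proof. by []. Qed.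
Definition me k : M k := exist _ [::] (nil_b k).

Lemma M_inj k (a b : M k) : sval a = sval b -> a = b.
Proof.
case: a b => [a pa] [b pb] /= eab; subst; congr exist; apply: eq_irrelevance.
Qed.

Lemma M_monoid k : is_monoid (@mop k) (me k).
Proof.
split; [|split].
- move=> a b c; apply: M_inj => /=.
  by rewrite nf_catl nf_catr catA.
- by move=> [a pa]; apply: M_inj => /=; rewrite (eqP pa).
- by move=> [a pa]; apply: M_inj => /=; rewrite cats0 (eqP pa).
Qed.

Lemma eval_sval k (s : nat -> M k) u :
  sval (eval (@mop k) (me k) s u) = nf k (flatten [seq sval (s x) | x <- u]).
Proof.
elim: u => [|x u IH] //=.
by rewrite IH nf_catr.
Qed.

Lemma sat_of k u v :
  (forall f : nat -> word, nf k (flatten (map f u)) = nf k (flatten (map f v))) ->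
  sat_id (@mop k) (me k) u v.
Proof.
move=> H s; apply: M_inj; rewrite !eval_sval; exact: (H (fun x => sval (s x))).
Qed.

Lemma nf_eq k W1 W2 : (goodb k W1 -> W1 = W2) -> (goodb k W2 -> W1 = W2) ->
  nf k W1 = nf k W2.
Proof.
rewrite /nf; case h1: (goodb k W1); case h2: (goodb k W2) => H1 H2.
- exact: H1.
- by move: h2; rewrite -(H1 isT) h1.
- by move: h1; rewrite (H2 isT) h2.
- done.
Qed.

Lemma comm_good k W p q : goodb k W ->
  (forall c, 2 * count_mem c p <= count_mem c W) ->
  (forall c, 2 * count_mem c q <= count_mem c W) -> p ++ q = q ++ p.
Proof.
move=> /goodP [_ H].
case: p => [|a p] hp hq; first by rewrite cats0.
case: q hq => [|b q] hq; first by rewrite cats0.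
have ha : 1 < count_mem a W by have := hp a; rewrite /= eqxx; lia.
have all1 : all (pred1 a) ((a :: p) ++ (b :: q)).
  apply/allP => c cin.
  have : 0 < count_mem c ((a :: p) ++ (b :: q)) by rewrite -has_count has_pred1.
  rewrite count_cat => hc.
  have hc2 : 1 < count_mem c W by have := hp c; have := hq c; lia.
  by apply/eqP; apply: H hc2 ha.
have all2 : all (pred1 a) ((b :: q) ++ (a :: p)) by rewrite all_cat andbC -all_cat.
move/all_pred1P: all1 => ->; move/all_pred1P: all2 => ->.
by rewrite !size_cat addnC.
Qed.

Lemma O_sat k u v : O_ids (u, v) ->
  forall f : nat -> word, nf k (flatten (map f u)) = nf k (flatten (map f v)).
Proof.
case=> [|[|]] [-> ->] f /=; apply: nf_eq => hg;
  (have C : f 0 ++ f 1 = f 1 ++ f 0 by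
    apply: (comm_good hg) => c; rewrite !count_cat; lia);
  by rewrite (catA (f 0) (f 1)) C -catA.
Qed.

Lemma flat_nseq0 (f : nat -> word) m : f 0 = [::] -> flatten (map f (nseq m 0)) = [::].
Proof. by move=> h; elim: m => //= m ->; rewrite h. Qed.

Lemma flat_inter0 (f : nat -> word) ts : f 0 = [::] ->
  flatten (map f (flatten [seq [:: i; 0] | i <- ts])) = flatten (map f ts).
Proof. by move=> h; elim: ts => //= t ts ->; rewrite h. Qed.

Lemma cnt_nseq (f : nat -> word) a m :
  m * count_mem a (f 0) <= count_mem a (flatten (map f (nseq m 0))).
Proof. elim: m => //= m IH; rewrite count_cat mulSn; lia. Qed.

Lemma cnt_inter (f : nat -> word) a ts :
  size ts * count_mem a (f 0) <= count_mem a (flatten (map f (flatten [seq [:: i; 0] | i <- ts]))).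
Proof. elim: ts => //= t ts IH; rewrite !count_cat mulSn; lia. Qed.

Lemma bad_of k a W : k < count_mem a W -> goodb k W = false.
Proof. by move=> hW; apply/goodP => -[H _]; have := H a; lia. Qed.

Lemma A_sat k n : k < n ->
  forall f : nat -> word, nf k (flatten (map f (A_id n).1)) = nf k (flatten (map f (A_id n).2)).
Proof.
move=> kn f; rewrite /A_id /=.
case E: (f 0) => [|a r].
  by rewrite map_cat flatten_cat flat_nseq0 // flat_inter0.
have h1 : 0 < count_mem a (f 0) by rewrite E /= eqxx.
have hl : k < count_mem a (flatten (map f (nseq n 0 ++ iota 1 n))).
  rewrite map_cat flatten_cat count_cat.
  have := cnt_nseq f a n; have := leq_pmulr n h1; lia.
have hr : k < count_mem a (flatten (map f (flatten [seq [:: i; 0] | i <- iota 1 n]))).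
  have := cnt_inter f a (iota 1 n); rewrite size_iota.
  have := leq_pmulr n h1; lia.
by rewrite /nf (bad_of hl) (bad_of hr).
Qed.

Lemma flatB (f : nat -> word) n j : flatten (map f (Bword n j)) =
  flatten (map f (nseq (n - 1 - j) 0)) ++ f 1 ++ flatten (map f (nseq j 0)).
Proof. by rewrite /Bword map_cat flatten_cat. Qed.

Lemma B_sat k n u v : k < n - 1 -> B_ids n (u, v) ->
  forall f : nat -> word, nf k (flatten (map f u)) = nf k (flatten (map f v)).
Proof.
move=> kn [j hj [-> ->]] f.
case E: (f 0) => [|a r].
  by rewrite !flatB !flat_nseq0.
have h1 : 0 < count_mem a (f 0) by rewrite E /= eqxx.
have hb : forall i, i <= n - 1 -> k < count_mem a (flatten (map f (Bword n i))).
  move=> i hi; rewrite flatB !count_cat.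
  have := cnt_nseq f a (n - 1 - i); have := cnt_nseq f a i.
  have := leq_pmulr (n - 1 - i) h1; have := leq_pmulr i h1; lia.
by rewrite /nf (bad_of (hb j _)) ?(bad_of (hb j.+1 _)) //; lia.
Qed.

Lemma cnt_tail (x a : nat) (ts es : seq nat) : size es = size ts ->
  count_mem a (flatten [seq t.1 :: nseq t.2 x | t <- zip ts es]) =
  count_mem a ts + (x == a) * sumn es.
Proof.
elim: ts es => [|t ts IH] [|e es] //=.
- by rewrite muln0.
- move=> [hs]; rewrite count_cat /= count_nseq IH // mulnDr /=; lia.
Qed.

Lemma good_rigid k w : 0 < k -> limited_rigid k w -> goodb k w.
Proof.
move=> k0 [x [ts [es [hu hs hk ->]]]].
case: es hs hk => [|e es] //= [hs] hk.
move: hu => /= /andP [xn uts].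
have cnt : forall a, count_mem a (rigid_of x ts (e :: es)) =
    (x == a) * (e + sumn es) + count_mem a ts.
  move=> a; rewrite /rigid_of /= count_cat count_nseq cnt_tail // mulnDr /=; lia.
have cts : forall a, count_mem a ts <= 1.
  by move=> a; rewrite count_uniq_mem //; case: (a \in ts).
apply/goodP; split.
- move=> c; rewrite cnt; case: (eqVneq x c) => [<-|ne] /=.
    rewrite (count_memPn xn); lia.
  by rewrite mul0n add0n; apply: leq_trans (cts c) k0.
- have hx : forall c, 1 < count_mem c (rigid_of x ts (e :: es)) -> c = x.
    move=> c; rewrite cnt; case: (eqVneq x c) => [<-|ne] //=.
    rewrite mul0n add0n => h; have := cts c; by rewrite leqNgt h.
  by move=> c d /hx -> /hx ->.
Qed.

Lemma flat_single k w : 0 < k -> flatten [seq nf k [:: x] | x <- w] = w.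
Proof.
move=> k0; elim: w => //= x w ->.
have -> : nf k [:: x] = [:: x] by rewrite /nf /goodb /= eqxx /= k0.
by [].
Qed.

Lemma isoterm_of k (Sigma : identity -> Prop) w : 0 < k -> goodb k w ->
  (forall u v, Sigma (u, v) -> forall f : nat -> word,
     nf k (flatten (map f u)) = nf k (flatten (map f v))) ->
  isoterm Sigma w.
Proof.
move=> k0 gw HS v Hv.
have inV : in_variety Sigma (@mop k) (me k).
  split; first exact: M_monoid.
  by move=> u v' hs; apply: sat_of; apply: HS.
have := Hv _ _ _ inV (fun x => embed k [:: x]).
move=> /(congr1 sval); rewrite !eval_sval /= !flat_single //.
rewrite {1}/nf gw /nf; case: (boolP (goodb k v)) => // hv hw.
by move: gw; rewrite hw Zbad.
Qed.

Theorem lemma3p2 (n : nat) (hn : 3 <= n) :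
  ((forall w : word, limited_rigid (n - 1) w -> isoterm (An_ids n) w) /\
   (forall j : nat, j <= n - 1 -> isoterm (An_ids n) (Bword n j))) /\
  (forall w : word, limited_rigid (n - 2) w -> isoterm (AnBn_ids n) w).
Proof.
have k1 : 0 < n - 1 by lia.
have k2 : 0 < n - 2 by lia.
have HA : forall k, k < n -> forall u v, An_ids n (u, v) -> forall f : nat -> word,
     nf k (flatten (map f u)) = nf k (flatten (map f v)).
  move=> k kn u v [ho|ha]; first exact: O_sat.
  by rewrite -[u]/((u, v).1) -[v]/((u, v).2) ha; apply: A_sat.
have part1 : forall w : word, limited_rigid (n - 1) w -> isoterm (An_ids n) w.
  move=> w hw; apply: (isoterm_of k1); first exact: good_rigid.
  by apply: HA; lia.
split; [split|].
- exact: part1.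
- move=> j hj; apply: part1.
  exists 0, [:: 1], [:: n - 1 - j; j]; split => //=.
    lia.
  by rewrite /rigid_of /Bword /= cats0.
- move=> w hw; apply: (isoterm_of k2); first exact: good_rigid.
  move=> u v [ha|hb].
    by apply: HA => //; lia.
  have hk : n - 2 < n - 1 by lia.
  exact: (B_sat hk hb).
Qed.
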